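(* Let $(\pi_k)_{k=0}^K$ be deterministic policies on an MDP as in the context, with $q^{\pi'_k}$, $v^{\pi'_k}$, $\sigma_k^2$ and $\Sigma_k^2$ defined in the context. Then for every $k\in\{1,\dots,K\}$, $$\Sigma_k^2 = \gamma^2\sigma_k^2 + \gamma^2P^{\pi_{k-1}}\Sigma_{k-1}^2.$$
   Context: MDP: finite state set $\mathcal{X}$, finite action set $\mathcal{A}$, discount $\gamma\in[0,1)$, reward $r\in[-1,1]^{\mathcal{X}\times\mathcal{A}}$, transition kernel $P(y|x,a)$. $(Pv)(x,a)=\sum_yP(y|x,a)v(y)$; for a policy $\pi$, $(\pi q)(x)=\sum_a\pi(a|x)q(x,a)$ and $(P^\pi q)(x,a) = (P\pi q)(x,a)$; $q^\pi$ is the unique fixed point of $q\mapsto r+\gamma P^\pi q$, $v^\pi=\pi q^\pi$. Definitions: $q^{\pi'_0}:=q^{\pi_0}$; $v^{\pi'_k} := \pi_kq^{\pi'_k}$; $q^{\pi'_k}:=r+\gamma Pv^{\pi'_{k-1}}$ for $k\in[K]$. $\sigma_0^2 := P(v^{\pi_0})^2-(Pv^{\pi_0})^2$ and $\sigma_k^2 := P(v^{\pi'_{k-1}})^2 - (Pv^{\pi'_{k-1}})^2$ for $k\in[K]$. For $k\in\{0,\dots,K\}$ and $(x,a)$, let $(X_t,A_t)_{t\ge0}$ be the process with $X_0=x$, $A_0=a$, $X_{t+1}\sim P(\cdot|X_t,A_t)$, $A_t = \pi_{k-t}(X_t)$ for $1\le t\le k$ and $A_t=\pi_0(X_t)$ for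 $t>k$, and define $\Sigma_k^2(x,a) := \mathbb{E}\big[(\sum_{t=0}^\infty\gamma^t r(X_t,A_t) - q^{\pi'_k}(x,a))^2\big]$. *)

(* Defs.v *)
From HB Require Import structures.
From mathcomp Require Import all_boot all_order all_algebra.
From mathcomp Require Import all_classical all_reals.
From mathcomp Require Import topology normedtype sequences.
Set Implicit Arguments. Unset Strict Implicit. Unset Printing Implicit Defensive.
Import Order.TTheory GRing.Theory Num.Theory.
Import numFieldNormedType.Exports.
Local Open Scope ring_scope.

Section MDP.
Variables (R : realType) (X A : finType).
Variables (P : X -> A -> X -> R) (r : X -> A -> R) (gamma : R).
Variable (pi : nat -> X -> A).

Definition Pv (v : X -> R) (x : X) (a : A) : R := \sum_(y : X) P x a y * v y.

Definition Ppi (pol : X -> A) (q : X -> A -> R) (x : X) (a : A) : R :=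
  Pv (fun y => q y (pol y)) x a.

(* q^{pi'_k}, given q0 = q^{pi_0}:  q'_0 = q0, q'_k = r + gamma P v'_{k-1},
   with v'_k = pi_k q'_k. *)
Fixpoint qprime (q0 : X -> A -> R) (k : nat) : X -> A -> R :=
  match k with
  | 0 => q0
  | k'.+1 => fun x a => r x a + gamma * Pv (fun y => qprime q0 k' y (pi k' y)) x a
  end.

Definition vprime (q0 : X -> A -> R) (k : nat) (x : X) : R := qprime q0 k x (pi k x).

Definition sigma2 (q0 : X -> A -> R) (k : nat) (x : X) (a : A) : R :=
  Pv (fun y => (vprime q0 k.-1 y) ^+ 2) x a - (Pv (vprime q0 k.-1) x a) ^+ 2.

(* Trajectories of the process of the context, truncated at horizon T:
   X_0 = x, (X_1, ..., X_T) = the tuple p. *)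
Definition state (x : X) (T : nat) (p : T.-tuple X) (t : nat) : X := nth x (x :: p) t.

Definition action (k : nat) (x : X) (a : A) (T : nat) (p : T.-tuple X) (t : nat) : A :=
  if t == 0%N then a
  else if (t <= k)%N then pi (k - t) (state x p t)
  else pi 0 (state x p t).

Definition path_prob (k : nat) (x : X) (a : A) (T : nat) (p : T.-tuple X) : R :=
  \prod_(t < T) P (state x p t) (action k x a p t) (state x p t.+1).

Definition ret (k : nat) (x : X) (a : A) (T : nat) (p : T.-tuple X) : R :=
  \sum_(t < T.+1) gamma ^+ t * r (state x p t) (action k x a p t).

Definition trunc_sqdev (k : nat) (x : X) (a : A) (c : R) (T : nat) : R :=
  \sum_(p : T.-tuple X) path_prob k x a p * (ret k x a p - c) ^+ 2.

(* Sigma_k^2(x,a) = E[(sum_{t>=0} gamma^t r(X_t,A_t) - q^{pi'_k}(x,a))^2],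
   the expectation of the infinite-horizon quantity being the limit of the
   truncated ones (bounded rewards, gamma < 1: uniform convergence). *)
Definition Sigma2 (q0 : X -> A -> R) (k : nat) (x : X) (a : A) : R :=
  limn (trunc_sqdev k x a (qprime q0 k x a)).

End MDP.

(* Main.v *)
Require Import Defs.
From HB Require Import structures.
From mathcomp Require Import all_boot all_order all_algebra.
From mathcomp Require Import all_classical all_reals.
From mathcomp Require Import topology normedtype sequences.
From mathcomp Require Import lra ring.
Import Order.TTheory GRing.Theory Num.Theory.
Import numFieldNormedType.Exports.
Local Open Scope classical_set_scope.
Local Open Scope ring_scope.

Section Aux.
Variables (R : realType) (X A : finType).

Lemma sum_tupleS (T : nat) (F : T.+1.-tuple X -> R) :
  \sum_(p : T.+1.-tuple X) F p = \sum_(y : X) \sum_(p : T.-tuple X) F (cons_tuple y p).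
Proof.
rewrite pair_big /=.
rewrite (reindex (fun u : X * T.-tuple X => (cons_tuple u.1 u.2))) //=.
exists (fun p : T.+1.-tuple X => (thead p, [tuple of behead p])).
  by move=> [y p] _ /=; congr pair; apply: val_inj.
by move=> p _ /=; rewrite [RHS]tuple_eta.
Qed.

Lemma sum_tuple0 (F : 0.-tuple X -> R) :
  \sum_(p : 0.-tuple X) F p = F [tuple].
Proof. by rewrite (big_pred1 [tuple]) // => p; rewrite /= (tuple0 p); apply/esym/eqP. Qed.

Lemma cvg_sumf (I : eqType) (s : seq I) (f : I -> nat -> R) (l : I -> R) :
  (forall i, f i n @[n --> \oo] --> l i) ->
  \sum_(i <- s) f i n @[n --> \oo] --> \sum_(i <- s) l i.
Proof.
move=> H; elim: s => [|i s IH].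
  rewrite big_nil; under eq_cvg do rewrite big_nil; exact: cvg_cst.
rewrite big_cons; under eq_cvg do rewrite big_cons.
exact: cvgD.
Qed.


Variables (P : X -> A -> X -> R) (r : X -> A -> R) (gamma : R) (pi : nat -> X -> A).

Lemma stateS T (y x : X) (p : T.-tuple X) t : (t <= T)%N ->
  state x (cons_tuple y p) t.+1 = state y p t.
Proof.
move=> ht; rewrite /state /=.
by apply: set_nth_default; rewrite /= size_tuple ltnS.
Qed.

Lemma actionS k T (x y : X) a (p : T.-tuple X) t : (t <= T)%N ->
  action pi k x a (cons_tuple y p) t.+1 = action pi k.-1 y (pi k.-1 y) p t.
Proof.
move=> ht; rewrite /action /= (@stateS _ y x p _ ht).
case: t ht => [|t] ht /=.
  by case: k => [|k] //=; rewrite subn1.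
case: k => [|k] //=; by rewrite ?ltnS ?subSS.
Qed.

Lemma ppS k T (x y : X) a (p : T.-tuple X) :
  path_prob P pi k x a (cons_tuple y p) =
  P x a y * path_prob P pi k.-1 y (pi k.-1 y) p.
Proof.
rewrite /path_prob.
rewrite (@big_ord_recl R 1 *%R T).
congr (_ * _).
apply: eq_bigr => i _ /=.
have hi : (i <= T)%N by apply: ltnW.
rewrite /bump /= add1n (@stateS _ y x p _ hi) (@actionS k _ x y a p _ hi).
by rewrite (@stateS _ y x p _ (ltn_ord i)).
Qed.

Lemma retS k T (x y : X) a (p : T.-tuple X) :
  ret r gamma pi k x a (cons_tuple y p) =
  r x a + gamma * ret r gamma pi k.-1 y (pi k.-1 y) p.
Proof.
rewrite /ret (@big_ord_recl R 0 +%R T.+1) /= expr0 mul1r; congr (_ + _).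
rewrite mulr_sumr; apply: eq_bigr => i _.
have hi : (i <= T)%N by rewrite -ltnS.
rewrite /bump /= add1n (@stateS _ y x p _ hi) (@actionS k _ x y a p _ hi) exprS mulrA.
by [].
Qed.

Hypothesis hP0 : forall x a y, 0 <= P x a y.
Hypothesis hP1 : forall x a, \sum_(y : X) P x a y = 1.
Hypothesis hr : forall x a, -1 <= r x a <= 1.
Hypothesis hg0 : 0 <= gamma.
Hypothesis hg1 : gamma < 1.

Definition M1 k x a T := \sum_(p : T.-tuple X) path_prob P pi k x a p * ret r gamma pi k x a p.
Definition M2 k x a T := \sum_(p : T.-tuple X) path_prob P pi k x a p * ret r gamma pi k x a p ^+ 2.
Definition b k y := pi k.-1 y.

Lemma pp_sum1 T : forall k x a, \sum_(p : T.-tuple X) path_prob P pi k x a p = 1.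
Proof.
elim: T => [|T IH] k x a.
  by rewrite sum_tuple0 /path_prob big_ord0.
rewrite sum_tupleS -[RHS](hP1 x a); apply: eq_bigr => y _.
under eq_bigr do rewrite ppS.
by rewrite -mulr_sumr IH mulr1.
Qed.

Lemma M1_0 k x a : M1 k x a 0 = r x a.
Proof. by rewrite /M1 sum_tuple0 /path_prob big_ord0 mul1r /ret big_ord1 expr0 mul1r. Qed.

Lemma M2_0 k x a : M2 k x a 0 = r x a ^+ 2.
Proof. by rewrite /M2 sum_tuple0 /path_prob big_ord0 mul1r /ret big_ord1 expr0 mul1r. Qed.

Lemma sum_lin (I : finType) (f g : I -> R) c r0 d :
  \sum_i (c * f i) * (r0 + d * g i) = c * r0 * \sum_i f i + d * (c * \sum_i f i * g i).
Proof. rewrite !mulr_sumr -big_split; apply: eq_bigr => i _ /=; ring. Qed.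

Lemma sum_quad (I : finType) (f g : I -> R) c r0 d :
  \sum_i (c * f i) * (r0 + d * g i) ^+ 2 =
  c * r0 ^+ 2 * \sum_i f i + 2 * d * r0 * (c * \sum_i f i * g i) + d ^+ 2 * (c * \sum_i f i * g i ^+ 2).
Proof. rewrite !mulr_sumr -!big_split; apply: eq_bigr => i _ /=; ring. Qed.

Lemma M1S k x a T : M1 k x a T.+1 =
  r x a + gamma * \sum_y P x a y * M1 k.-1 y (pi k.-1 y) T.
Proof.
rewrite /M1 sum_tupleS.
under eq_bigr do under eq_bigr do rewrite ppS retS.
under eq_bigr do rewrite sum_lin pp_sum1 mulr1.
by rewrite big_split /= -mulr_suml hP1 mul1r -mulr_sumr.
Qed.

Lemma M2S k x a T : M2 k x a T.+1 =
  r x a ^+ 2 + 2 * gamma * r x a * (\sum_y P x a y * M1 k.-1 y (pi k.-1 y) T)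
  + gamma ^+ 2 * \sum_y P x a y * M2 k.-1 y (pi k.-1 y) T.
Proof.
rewrite /M2 sum_tupleS.
under eq_bigr do under eq_bigr do rewrite ppS retS.
under eq_bigr do rewrite sum_quad pp_sum1 mulr1.
rewrite !big_split /= -mulr_suml hP1 mul1r -!mulr_sumr.
done.
Qed.



Lemma Pv_bound x a (f : X -> R) C : (forall y, `|f y| <= C) ->
  `|\sum_y P x a y * f y| <= C.
Proof.
move=> hf; apply: le_trans (ler_norm_sum _ _ _) _.
apply: le_trans (_ : \sum_y P x a y * C <= C); last by rewrite -mulr_suml hP1 mul1r.
apply: ler_sum => y _; rewrite normrM (ger0_norm (hP0 _ _ _)).
exact: ler_wpM2l.
Qed.

Lemma Pv_diff x a (f g : X -> R) :
  \sum_y P x a y * f y - \sum_y P x a y * g y = \sum_y P x a y * (f y - g y).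
Proof. by rewrite -sumrB; apply: eq_bigr => y _; rewrite mulrBr. Qed.

Definition B := (1 - gamma)^-1.
Lemma hB : B * (1 - gamma) = 1.
Proof. by rewrite mulVf // subr_eq0 eq_sym lt_eqF. Qed.
Lemma B_ge1 : 1 <= B.
Proof.
have hpos : 0 < B by rewrite invr_gt0 subr_gt0.
have h := mulr_ge0 (ltW hpos) hg0; have := hB; rewrite mulrBr mulr1; lra.
Qed.

Lemma rnorm x a : `|r x a| <= 1.
Proof. by rewrite ler_norml hr. Qed.

Lemma M1_bound T : forall k x a, `|M1 k x a T| <= B.
Proof.
elim: T => [|T IH] k x a.
  by rewrite M1_0; apply: le_trans (rnorm x a) B_ge1.
rewrite M1S; apply: le_trans (ler_normD _ _) _; rewrite normrM (ger0_norm hg0).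
have h1 := rnorm x a.
have h2 : `|\sum_y P x a y * M1 k.-1 y (pi k.-1 y) T| <= B by apply: Pv_bound.
have h3 := ler_wpM2l hg0 h2.
have := hB; nra.
Qed.

Lemma M2_bound T : forall k x a, `|M2 k x a T| <= B ^+ 2.
Proof.
elim: T => [|T IH] k x a.
  rewrite M2_0 normrX; have h1 := rnorm x a; have h2 := B_ge1.
  have h0 : 0 <= `|r x a| by [].
  nra.
rewrite M2S.
have h1 := rnorm x a.
have h2 : `|\sum_y P x a y * M1 k.-1 y (pi k.-1 y) T| <= B by apply: Pv_bound => y; exact: M1_bound.
have h3 : `|\sum_y P x a y * M2 k.-1 y (pi k.-1 y) T| <= B ^+ 2 by apply: Pv_bound.
set S1 := \sum_y _ * M1 _ _ _ _ in h2 *; set S2 := \sum_y _ * M2 _ _ _ _ in h3 *.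
apply: le_trans (ler_normD _ _) _; apply: le_trans (lerD (ler_normD _ _) (lexx _)) _.
rewrite !normrM (ger0_norm hg0) (ger0_norm (ler0n _ 2)).
have h0 : 0 <= `|r x a| by [].
have h4 : 0 <= `|S1| by [].
have hb := B_ge1.
have e1 : `|r x a| * `|S1| <= B.
  by rewrite -[B]mul1r; apply: ler_pM.
have e0 : `|r x a| * `|r x a| <= 1 by rewrite -[1]mul1r; apply: ler_pM.
have e2 : gamma * gamma * `|S2| <= gamma * gamma * B ^+ 2 by apply: ler_wpM2l => //; exact: mulr_ge0.
have e3 : 2 * gamma * `|r x a| * `|S1| <= 2 * gamma * B.
  by rewrite -!mulrA; apply: ler_wpM2l => //; apply: ler_wpM2l.
have : B = 1 + gamma * B by have := hB; rewrite mulrBr mulr1; lra.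
move=> eB.
have -> : B ^+ 2 = 1 + 2 * gamma * B + gamma * gamma * B ^+ 2.
  by rewrite [in LHS]eB; ring.
lra.
Qed.

Lemma dM1 T : forall k x a, `|M1 k x a T.+1 - M1 k x a T| <= gamma ^+ T.+1.
Proof.
elim: T => [|T IH] k x a.
  rewrite M1S M1_0; under eq_bigr do rewrite M1_0.
  rewrite addrC addKr normrM (ger0_norm hg0) expr1 -[X in _ <= X]mulr1.
  apply: ler_wpM2l => //; apply: Pv_bound => y; exact: rnorm.
rewrite (M1S k x a T.+1) (M1S k x a T) opprD addrACA subrr add0r -mulrBr Pv_diff.
rewrite normrM (ger0_norm hg0) [X in _ <= X]exprS.
apply: ler_wpM2l => //; apply: Pv_bound => y; exact: IH.
Qed.

Lemma addK3 (u v w : R) : u + v + w - u = v + w. Proof. ring. Qed.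
Lemma addB3 (u v w v' w' : R) : u + v + w - (u + v' + w') = (v - v') + (w - w'). Proof. ring. Qed.

Lemma dM2 T : forall k x a, `|M2 k x a T.+1 - M2 k x a T| <= 3 * B * gamma ^+ T.+1.
Proof.
have eB : B * gamma = B - 1 by have := hB; rewrite mulrBr mulr1; lra.
have hb := B_ge1.
elim: T => [|T IH] k x a.
  have s1 : \sum_y P x a y * M1 k.-1 y (pi k.-1 y) 0 = \sum_y P x a y * r y (pi k.-1 y) by apply: eq_bigr => y _; rewrite M1_0.
  have s2 : \sum_y P x a y * M2 k.-1 y (pi k.-1 y) 0 = \sum_y P x a y * r y (pi k.-1 y) ^+ 2 by apply: eq_bigr => y _; rewrite M2_0.
  rewrite M2S M2_0 s1 s2.
  rewrite addK3 expr1.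
  set S1 := \sum_y _ * r _ _; set S2 := \sum_y _ * (r _ _ ^+ 2).
  have h1 : `|S1| <= 1 by apply: Pv_bound => y; exact: rnorm.
  have h2 : `|S2| <= 1 by apply: Pv_bound => y; rewrite normrX expr2 -[1]mul1r; apply: ler_pM => //; exact: rnorm.
  apply: le_trans (ler_normD _ _) _; rewrite !normrM !(ger0_norm hg0) (ger0_norm (ler0n _ 2)) -expr2.
  have e1 : `|r x a| * `|S1| <= 1 by rewrite -[1]mul1r; apply: ler_pM => //; exact: rnorm.
  have e1' : 2 * gamma * `|r x a| * `|S1| <= 2 * gamma.
  by rewrite -!mulrA; apply: ler_wpM2l => //; rewrite -[X in _ <= X]mulr1; apply: ler_wpM2l.
  have e2 : gamma ^+ 2 * `|S2| <= gamma ^+ 2 by rewrite -[X in _ <= X]mulr1; apply: ler_wpM2l => //; exact: exprn_ge0.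
  have e3 : gamma ^+ 2 <= gamma by rewrite expr2 -[X in _ <= X]mul1r; apply: ler_wpM2r => //; exact: ltW.
  have e4 : gamma <= B * gamma by rewrite -[X in X <= _]mul1r; apply: ler_wpM2r.
  lra.
rewrite (M2S k x a T.+1) (M2S k x a T).
set g := gamma ^+ T.+1.
have hg : 0 <= g by exact: exprn_ge0.
rewrite addB3.
rewrite -mulrBr -mulrBr !Pv_diff.
set D1 := \sum_y _; set D2 := \sum_y _.
have h1 : `|D1| <= g by apply: Pv_bound => y; exact: dM1.
have h2 : `|D2| <= 3 * B * g by apply: Pv_bound => y; exact: IH.
apply: le_trans (ler_normD _ _) _; rewrite !normrM !(ger0_norm hg0) (ger0_norm (ler0n _ 2)) -expr2.
have e1 : `|r x a| * `|D1| <= g by rewrite -[g]mul1r; apply: ler_pM => //; exact: rnorm.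
have e1' : 2 * gamma * `|r x a| * `|D1| <= 2 * gamma * g by rewrite -!mulrA; apply: ler_wpM2l => //; apply: ler_wpM2l.
have e2 : gamma ^+ 2 * `|D2| <= gamma ^+ 2 * (3 * B * g) by apply: ler_wpM2l => //; exact: exprn_ge0.
have hgg : 0 <= gamma * g by exact: mulr_ge0.
have key : 2 * gamma * g + gamma ^+ 2 * (3 * B * g) <= 3 * B * gamma ^+ T.+2.
  rewrite exprS -/g.
  have E : 3 * B * (gamma * g) - (2 * gamma * g + gamma ^+ 2 * (3 * B * g)) = gamma * g * (3 * (B * (1 - gamma)) - 2) by ring.
  rewrite hB in E; rewrite -subr_ge0 E; apply: mulr_ge0 => //; lra.
apply: le_trans key; exact: lerD.
Qed.

Lemma geo0 c : (fun n => c * gamma ^+ n) @ \oo --> 0.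
Proof.
have hg : `|gamma| < 1 by rewrite ger0_norm.
have := cvgM (cvg_cst c) (cvg_expr hg); rewrite mulr0; exact.
Qed.

Lemma geo_cvg (u : nat -> R) C D : 0 <= C -> (forall n, u n <= D) ->
  (forall n, `|u n.+1 - u n| <= C * gamma ^+ n) -> cvgn u.
Proof.
move=> hC hD hd.
pose w := fun n => u n - C * B * gamma ^+ n.
have hw : cvgn w.
  apply: nondecreasing_is_cvgn.
    apply/nondecreasing_seqP => n; rewrite /w.
    have := hd n; rewrite ler_norml => /andP[h1 _].
    have E : C * B * gamma ^+ n - C * B * gamma ^+ n.+1 = C * gamma ^+ n.
      by rewrite exprS -[RHS]mulr1 -hB; ring.
    lra.
  exists D => _ [n _ <-]; rewrite /w.
  have : 0 <= C * B * gamma ^+ n.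
    apply: mulr_ge0; [apply: mulr_ge0 => //; exact: le_trans B_ge1 | exact: exprn_ge0].
  have := hD n; lra.
have -> : u = w + (fun n => C * B * gamma ^+ n).
  by apply: funext => n; rewrite /w /= subrK.
apply: is_cvgD => //; exact: cvgP (geo0 _).
Qed.

Lemma M2_cvg k x a : cvgn (M2 k x a).
Proof.
apply: (@geo_cvg _ (3 * B * gamma) (B ^+ 2)).
- apply: mulr_ge0 => //; apply: mulr_ge0 => //; exact: le_trans B_ge1.
- by move=> n; apply: le_trans (ler_norm _) (M2_bound _ _ _ _).
- move=> n; rewrite (_ : 3 * B * gamma * gamma ^+ n = 3 * B * gamma ^+ n.+1); first exact: dM2.
  by rewrite exprS; ring.
Qed.

Variable q0 : X -> A -> R.
Hypothesis hq0 : forall x a, q0 x a = r x a + gamma * Ppi P (pi 0%N) q0 x a.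

Lemma single_le (f : X -> A -> R) x a : (forall x a, 0 <= f x a) ->
  f x a <= \sum_x' \sum_a' f x' a'.
Proof.
move=> h0; rewrite (bigD1 x) //= (bigD1 a) //= -addrA lerDl.
apply: addr_ge0; first by apply: sumr_ge0.
by apply: sumr_ge0 => x' _; apply: sumr_ge0.
Qed.

Lemma M1_lim j : forall x a, M1 j x a n @[n --> \oo] --> qprime P r gamma pi q0 j x a.
Proof.
elim: j => [|j IH] x a /=.
  pose Q := \sum_x' \sum_a' `|r x' a' - q0 x' a'|.
  have hb : forall T x a, `|M1 0 x a T - q0 x a| <= gamma ^+ T * Q.
    elim => [|T IHT] x' a'.
      by rewrite M1_0 expr0 mul1r; apply: (single_le (fun x a => `|r x a - q0 x a|)).
    rewrite M1S /= [in X in _ - X]hq0 /Ppi /Pv opprD addrACA subrr add0r -mulrBr Pv_diff.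
    rewrite normrM (ger0_norm hg0) exprS -mulrA; apply: ler_wpM2l => //.
    by apply: Pv_bound => y; exact: IHT.
  apply: (@squeeze_cvgr _ _ _ _ (fun n => q0 x a - Q * gamma ^+ n) (fun n => q0 x a + Q * gamma ^+ n)).
  - apply: nearW => n; have := hb n x a; rewrite ler_distl mulrC; done.
  - rewrite -[X in _ --> X]subr0; apply: cvgB; [exact: cvg_cst | exact: geo0].
  - rewrite -[X in _ --> X]addr0; apply: cvgD; [exact: cvg_cst | exact: geo0].
rewrite -cvg_shiftS /=.
under eq_cvg do rewrite M1S /=.
apply: cvgD; first exact: cvg_cst.
apply: cvgM; first exact: cvg_cst.
apply: cvg_sumf => y.
apply: cvgM; first exact: cvg_cst.
exact: IH.
Qed.

Lemma trunc_eq k x a c T : trunc_sqdev P r gamma pi k x a c T =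
  M2 k x a T - 2 * c * M1 k x a T + c ^+ 2.
Proof.
rewrite /trunc_sqdev /M2 /M1 -[c ^+ 2]mulr1 -[X in c ^+ 2 * X](pp_sum1 T k x a) !mulr_sumr -sumrB -big_split /=.
by apply: eq_bigr => p _; ring.
Qed.

Lemma SigmaE k x a : Sigma2 P r gamma pi q0 k x a =
  limn (M2 k x a) - qprime P r gamma pi q0 k x a ^+ 2.
Proof.
rewrite /Sigma2.
set c := qprime P r gamma pi q0 k x a.
have h : trunc_sqdev P r gamma pi k x a c n @[n --> \oo] --> limn (M2 k x a) - 2 * c * c + c ^+ 2.
  under eq_cvg do rewrite trunc_eq.
  apply: cvgD; last exact: cvg_cst.
  apply: cvgB; first exact: M2_cvg.
  apply: cvgM; first exact: cvg_cst.
  exact: M1_lim.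
rewrite (cvg_lim _ h) //; ring.
Qed.

Lemma limM2S j x a : limn (M2 j.+1 x a) =
  r x a ^+ 2 + 2 * gamma * r x a * (\sum_y P x a y * qprime P r gamma pi q0 j y (pi j y))
  + gamma ^+ 2 * \sum_y P x a y * limn (M2 j y (pi j y)).
Proof.
apply: cvg_lim => //.
rewrite -cvg_shiftS /=.
under eq_cvg do rewrite M2S /=.
apply: cvgD; first apply: cvgD; first exact: cvg_cst.
- apply: cvgM; first exact: cvg_cst.
  apply: cvg_sumf => y; apply: cvgM; first exact: cvg_cst.
  exact: M1_lim.
- apply: cvgM; first exact: cvg_cst.
  apply: cvg_sumf => y; apply: cvgM; first exact: cvg_cst.
  exact: M2_cvg.
Qed.

Lemma main k x a : (0 < k)%N ->
    Sigma2 P r gamma pi q0 k x a =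
      gamma ^+ 2 * sigma2 P r gamma pi q0 k x a
      + gamma ^+ 2 * Ppi P (pi k.-1) (Sigma2 P r gamma pi q0 k.-1) x a.
Proof.
case: k => [//|j] _ /=.
rewrite SigmaE limM2S /=.
have -> : Ppi P (pi j) (Sigma2 P r gamma pi q0 j) x a =
  \sum_y P x a y * limn (M2 j y (pi j y)) -
  \sum_y P x a y * qprime P r gamma pi q0 j y (pi j y) ^+ 2.
  by rewrite Pv_diff /Ppi /Pv; apply: eq_bigr => y _; rewrite SigmaE.
rewrite /sigma2 /Pv /vprime /=.
ring.
Qed.
End Aux.

Theorem lemma23 (R : realType) (X A : finType)
  (P : X -> A -> X -> R) (r : X -> A -> R) (gamma : R)
  (pi : nat -> X -> A) (K : nat) (q0 : X -> A -> R) :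
  (forall x a y, 0 <= P x a y) ->
  (forall x a, \sum_(y : X) P x a y = 1) ->
  (forall x a, -1 <= r x a <= 1) ->
  0 <= gamma -> gamma < 1 ->
  (* q0 = q^{pi_0}: the (unique) fixed point of q |-> r + gamma P^{pi_0} q *)
  (forall x a, q0 x a = r x a + gamma * Ppi P (pi 0%N) q0 x a) ->
  forall k : nat, (1 <= k <= K)%N ->
  forall x a,
    Sigma2 P r gamma pi q0 k x a =
      gamma ^+ 2 * sigma2 P r gamma pi q0 k x a
      + gamma ^+ 2 * Ppi P (pi k.-1) (Sigma2 P r gamma pi q0 k.-1) x a.
Proof.
move=> hP0 hP1 hr hg0 hg1 hq0 k /andP[hk _] x a.
exact: (@main R X A P r gamma pi hP0 hP1 hr hg0 hg1 q0 hq0 k x a hk).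
Qed.
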